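(* For every $X\in\overline\Omega_{1/6}$, $$\|\nabla h(X)\|_F^2\ge\|\nabla g(X)\|_F^2+\Big(\frac23\beta^2-4\beta M_1\Big)\|X^\top X-I_p\|_F^2 .$$
   Context: $f:\mathbb{R}^{n\times p}\to\mathbb{R}$ is differentiable with $f,\nabla f$ locally Lipschitz. $\mathcal{A}(X):=\frac32I_p-\frac12X^\top X$, $g(X):=f(X\mathcal{A}(X))$, $h(X):=g(X)+\frac\beta4\|X^\top X-I_p\|_F^2$ with $\beta>0$, $G(X):=\nabla f(Y)|_{Y=X\mathcal{A}(X)}$. $\overline\Omega_r:=\{X:\|X^\top X-I_p\|_F\le r\}$; $\Omega:=\{X:\|X\|_2\le1+\frac1{12}\}$; $M_1:=\sup_{X\in\Omega}\|G(X)\|_F$. *)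

(* Defs.v *)
From HB Require Import structures.
From mathcomp Require Import all_boot all_order all_algebra.
From mathcomp Require Import all_classical all_reals all_analysis.
Set Implicit Arguments. Unset Strict Implicit. Unset Printing Implicit Defensive.
Import Order.TTheory GRing.Theory Num.Theory.
Import numFieldNormedType.Exports.
Local Open Scope classical_set_scope.
Local Open Scope ring_scope.

Section Defs.
Variable R : realType.

Definition frob (m k : nat) (X : 'M[R]_(m, k)) : R :=
  Num.sqrt (\sum_(i < m) \sum_(j < k) X i j ^+ 2).

Definition spec_norm (m k : nat) (X : 'M[R]_(m, k)) : R :=
  sup [set frob (X *m v) | v in [set v : 'cV[R]_k | frob v = 1]].

Definition grad (m k : nat) (F : 'M[R]_(m, k) -> R) (X : 'M[R]_(m, k)) : 'M[R]_(m, k) :=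
  \matrix_(i, j) derive F X (delta_mx i j).

(* locally Lipschitz (any norms; the library norm on matrices is used) *)
Definition locally_lipschitz (V W : normedModType R) (F : V -> W) : Prop :=
  forall x : V, exists2 r : R, 0 < r & exists L : R,
    forall y z : V, `|y - x| < r -> `|z - x| < r -> `|F y - F z| <= L * `|y - z|.

Variables n p : nat.

Definition Acal (X : 'M[R]_(n, p)) : 'M[R]_p :=
  (3 / 2 : R)%:M - (1 / 2 : R) *: (X^T *m X).

Definition gfun (f : 'M[R]_(n, p) -> R) (X : 'M[R]_(n, p)) : R :=
  f (X *m Acal X).

Definition hfun (beta : R) (f : 'M[R]_(n, p) -> R) (X : 'M[R]_(n, p)) : R :=
  gfun f X + beta / 4 * frob (X^T *m X - 1%:M) ^+ 2.

Definition Gfun (f : 'M[R]_(n, p) -> R) (X : 'M[R]_(n, p)) : 'M[R]_(n, p) :=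
  grad f (X *m Acal X).

Definition Omega : set 'M[R]_(n, p) := [set X | spec_norm X <= 1 + 1 / 12].

Definition M1 (f : 'M[R]_(n, p) -> R) : R :=
  sup [set frob (Gfun f X) | X in Omega].

End Defs.

(* Main.v *)
Require Import Defs.
From HB Require Import structures.
From mathcomp Require Import all_boot all_order all_algebra.
From mathcomp Require Import all_classical all_reals all_analysis.
From mathcomp Require Import ring lra.
Set Implicit Arguments. Unset Strict Implicit. Unset Printing Implicit Defensive.
Import Order.TTheory GRing.Theory Num.Theory.
Import numFieldNormedType.Exports.
Local Open Scope classical_set_scope.
Local Open Scope ring_scope.
Section IP.
Variable R : realType.

Definition ip (m k : nat) (A B : 'M[R]_(m, k)) : R :=
  \sum_(i < m) \sum_(j < k) A i j * B i j.
Definition fs (m k : nat) (A : 'M[R]_(m, k)) : R := ip A A.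

Lemma ipC m k (A B : 'M[R]_(m,k)) : ip A B = ip B A.
Proof. by apply: eq_bigr => i _; apply: eq_bigr => j _; rewrite mulrC. Qed.

Lemma ipDl m k (A B C : 'M[R]_(m,k)) : ip (A + B) C = ip A C + ip B C.
Proof.
rewrite /ip -big_split; apply: eq_bigr => i _; rewrite -big_split.
by apply: eq_bigr => j _; rewrite !mxE mulrDl.
Qed.

Lemma ipDr m k (A B C : 'M[R]_(m,k)) : ip C (A + B) = ip C A + ip C B.
Proof. by rewrite ipC ipDl !(ipC C). Qed.

Lemma ipZl m k a (A C : 'M[R]_(m,k)) : ip (a *: A) C = a * ip A C.
Proof.
rewrite /ip mulr_sumr; apply: eq_bigr => i _; rewrite mulr_sumr.
by apply: eq_bigr => j _; rewrite !mxE mulrA.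
Qed.

Lemma ipZr m k a (A C : 'M[R]_(m,k)) : ip C (a *: A) = a * ip C A.
Proof. by rewrite ipC ipZl ipC. Qed.

Lemma ipNl m k (A C : 'M[R]_(m,k)) : ip (- A) C = - ip A C.
Proof. by rewrite -scaleN1r ipZl mulN1r. Qed.

Lemma ipNr m k (A C : 'M[R]_(m,k)) : ip C (- A) = - ip C A.
Proof. by rewrite ipC ipNl ipC. Qed.

Lemma ipBl m k (A B C : 'M[R]_(m,k)) : ip (A - B) C = ip A C - ip B C.
Proof. by rewrite ipDl ipNl. Qed.

Lemma ipBr m k (A B C : 'M[R]_(m,k)) : ip C (A - B) = ip C A - ip C B.
Proof. by rewrite ipDr ipNr. Qed.

Lemma ip0l m k (C : 'M[R]_(m,k)) : ip 0 C = 0.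
Proof. by rewrite -(scale0r 0) ipZl mul0r. Qed.

Lemma ip_tr m k (A B : 'M[R]_(m,k)) : ip A^T B^T = ip A B.
Proof.
rewrite /ip exchange_big; apply: eq_bigr => i _; apply: eq_bigr => j _.
by rewrite !mxE.
Qed.

Lemma ip_mull m l k (A : 'M[R]_(m,l)) (B : 'M[R]_(l,k)) C :
  ip (A *m B) C = ip B (A^T *m C).
Proof.
rewrite /ip.
under eq_bigr => i _ do under eq_bigr => j _ do rewrite mxE mulr_suml.
under [RHS]eq_bigr => i _ do under eq_bigr => j _ do rewrite mxE mulr_sumr.
rewrite (exchange_big).
under eq_bigr => j _ do rewrite (exchange_big).
rewrite exchange_big.
apply: eq_bigr => i _; apply: eq_bigr => j _; apply: eq_bigr => l' _.
by rewrite !mxE; ring.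
Qed.

Lemma ip_mulr m l k (A : 'M[R]_(m,l)) (B : 'M[R]_(l,k)) C :
  ip (A *m B) C = ip A (C *m B^T).
Proof.
by rewrite -[LHS]ip_tr trmx_mul ip_mull trmxK -[RHS]ip_tr trmx_mul trmxK.
Qed.

Lemma ip_delta m k (A : 'M[R]_(m,k)) i j : ip A (delta_mx i j) = A i j.
Proof.
rewrite /ip (bigD1 i) //=.
rewrite [X in _ + X]big1 ?addr0; last first.
  move=> i' ne; apply: big1 => j' _; rewrite mxE.
  by rewrite (negbTE ne) /= mulr0.
rewrite (bigD1 j) //=.
rewrite [X in _ + X]big1 ?addr0; last first.
  by move=> j' ne; rewrite mxE (negbTE ne) andbF mulr0.
by rewrite mxE !eqxx mulr1.
Qed.

Lemma fs_ge0 m k (A : 'M[R]_(m,k)) : 0 <= fs A.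
Proof.
by apply: sumr_ge0 => i _; apply: sumr_ge0 => j _; rewrite -expr2 sqr_ge0.
Qed.

Lemma frob_fs m k (A : 'M[R]_(m,k)) : frob A = Num.sqrt (fs A).
Proof.
by rewrite /frob /fs /ip; congr Num.sqrt; apply: eq_bigr => i _.
Qed.

Lemma frob_sq m k (A : 'M[R]_(m,k)) : frob A ^+ 2 = fs A.
Proof. by rewrite frob_fs sqr_sqrtr // fs_ge0. Qed.

Lemma frob_ge0 m k (A : 'M[R]_(m,k)) : 0 <= frob A.
Proof. by rewrite frob_fs sqrtr_ge0. Qed.

Lemma fs_eq0 m k (A : 'M[R]_(m,k)) : fs A = 0 -> A = 0.
Proof.
move=> /eqP; rewrite psumr_eq0; last first.
  by move=> i _; apply: sumr_ge0 => j _; rewrite -expr2 sqr_ge0.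
move=> /allP H; apply/matrixP => i j; rewrite mxE.
have /H/implyP/(_ isT) := mem_index_enum i.
rewrite psumr_eq0; last by move=> j' _; rewrite -expr2 sqr_ge0.
move=> /allP /(_ j (mem_index_enum j)) /implyP /(_ isT).
by rewrite mulf_eq0 orbb => /eqP.
Qed.

Lemma ip_CS m k (A B : 'M[R]_(m,k)) : `|ip A B| <= frob A * frob B.
Proof.
set a := frob A; set b := frob B.
have a0 : 0 <= a by apply: frob_ge0.
have b0 : 0 <= b by apply: frob_ge0.
have ha : fs A = a ^+ 2 by rewrite frob_sq.
have hb : fs B = b ^+ 2 by rewrite frob_sq.
have h1 := fs_ge0 (b *: A - a *: B).
have h2 := fs_ge0 (b *: A + a *: B).
rewrite /fs !(ipDl, ipDr, ipNl, ipNr, ipZl, ipZr) -/(fs A) -/(fs B) ha hb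
  (ipC B A) in h1 h2.
have [ab0|abgt0] := eqVneq (a * b) 0.
  move: ab0 => /eqP; rewrite mulf_eq0 => /orP[] /eqP.
    move=> a00; have : fs A = 0 by rewrite ha a00 expr2 mul0r.
    by move/fs_eq0 ->; rewrite ip0l normr0 mulr_ge0.
  move=> b00; have : fs B = 0 by rewrite hb b00 expr2 mul0r.
  by move/fs_eq0 ->; rewrite ipC ip0l normr0 mulr_ge0.
have abp : 0 < a * b by rewrite lt_def abgt0 mulr_ge0.
rewrite ler_norml; apply/andP; split.
  rewrite -subr_ge0 -(pmulr_rge0 _ abp); nra.
rewrite -subr_ge0 -(pmulr_rge0 _ abp); nra.
Qed.

End IP.
Section Submult.
Variable R : realType.

Lemma entry_ip m l k (A : 'M[R]_(m,l)) (B : 'M[R]_(l,k)) i j :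
  (A *m B) i j = ip (row i A) (col j B)^T.
Proof.
rewrite /ip big_ord1 mxE; apply: eq_bigr => k' _; by rewrite !mxE.
Qed.

Lemma fs_rows m k (A : 'M[R]_(m,k)) : fs A = \sum_i fs (row i A).
Proof.
rewrite /fs /ip; apply: eq_bigr => i _; rewrite big_ord1.
by apply: eq_bigr => j _; rewrite !mxE.
Qed.

Lemma fs_cols m k (A : 'M[R]_(m,k)) : fs A = \sum_j fs (col j A)^T.
Proof.
rewrite /fs /ip exchange_big; apply: eq_bigr => j _; rewrite big_ord1.
by apply: eq_bigr => i _; rewrite !mxE.
Qed.

Lemma fs_mul m l k (A : 'M[R]_(m,l)) (B : 'M[R]_(l,k)) :
  fs (A *m B) <= fs A * fs B.
Proof.
rewrite [X in _ <= X * _]fs_rows [X in _ <= _ * X]fs_cols mulr_suml.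
have -> : fs (A *m B) = \sum_i \sum_j ((A *m B) i j) ^+ 2.
  by apply: eq_bigr => i _; apply: eq_bigr => j _; rewrite expr2.
apply: ler_sum => i _; rewrite mulr_sumr; apply: ler_sum => j _.
rewrite entry_ip -(frob_sq (row i A)) -(frob_sq (col j B)^T) -exprMn.
have := ip_CS (row i A) (col j B)^T; rewrite ler_norml => /andP[h1 h2].
have := frob_ge0 (row i A); have := frob_ge0 (col j B)^T; nra.
Qed.

Lemma frob_mul m l k (A : 'M[R]_(m,l)) (B : 'M[R]_(l,k)) :
  frob (A *m B) <= frob A * frob B.
Proof.
rewrite !frob_fs -sqrtrM ?fs_ge0 //; apply: ler_wsqrtr; exact: fs_mul.
Qed.

End Submult.
Section PolyDerive.
Variable R : realType.

Lemma poly_derive (V W : normedModType R) (F : V -> W) (x v : V) (c1 c2 c3 c4 : W) :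
  (forall t : R, F (t *: v + x) = F x + t *: c1 + t ^+ 2 *: c2 + t ^+ 3 *: c3
     + t ^+ 4 *: c4) ->
  is_derive x v F c1.
Proof.
move=> HF.
have L : (fun h : R => h^-1 *: ((F \o shift x) (h *: v) - F x)) @ 0^' --> c1.
  have E : {near 0^', (fun h : R => c1 + h *: c2 + h ^+ 2 *: c3 + h ^+ 3 *: c4) =1
      (fun h => h^-1 *: ((F \o shift x) (h *: v) - F x))}.
    near=> h.
    have h0 : h != 0 by near: h; exact: nbhs_dnbhs_neq.
    rewrite /= /shift HF.
    have -> : forall a b c d e : W, a + b + c + d + e - a = b + c + d + e.
      by move=> a b c d e; rewrite addrC !addrA addNr add0r.
    rewrite !scalerDr !scalerA mulVf // scale1r.
    by rewrite !exprS expr0 mulr1 !mulrA mulVf // !mul1r.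
  apply: cvg_trans (near_eq_cvg E) _.
  have G : (fun h : R => c1 + h *: c2 + h ^+ 2 *: c3 + h ^+ 3 *: c4) @ (nbhs (0:R)) -->
      c1 + (0:R) *: c2 + (0:R) ^+ 2 *: c3 + (0:R) ^+ 3 *: c4.
    apply: cvgD; first apply: cvgD; first apply: cvgD.
    - exact: cvg_cst.
    - by apply: cvgZ; [exact: cvg_id | exact: cvg_cst].
    - apply: cvgZ; last exact: cvg_cst.
      rewrite expr2; under eq_fun do rewrite expr2.
      by apply: cvgM; exact: cvg_id.
    - apply: cvgZ; last exact: cvg_cst.
      rewrite (_ : (0:R) ^+ 3 = 0 * (0 * 0)); last by rewrite expr0n /= !mulr0.
      under eq_fun do rewrite !exprS expr0 mulr1.
      by apply: cvgM; [exact: cvg_id | apply: cvgM; exact: cvg_id].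
  rewrite !expr0n /= !scale0r !addr0 in G.
  exact: cvg_within_filter G.
apply: DeriveDef; first by apply/cvg_ex; exists c1.
exact: cvg_lim L.
Unshelve. all: by end_near.
Qed.

End PolyDerive.
Section Diffs.
Variable R : realType.

Section Gen.
Variable V : normedModType R.
Implicit Types (x : V).

Lemma dD (f g : V -> R) x : differentiable f x -> differentiable g x ->
  differentiable (fun y => f y + g y) x.
Proof. exact: differentiableD. Qed.

Lemma dM (f g : V -> R) x : differentiable f x -> differentiable g x ->
  differentiable (fun y => f y * g y) x.
Proof. exact: differentiableM. Qed.

Lemma dcst (c : R) x : differentiable (fun _ : V => c) x.
Proof. exact: differentiable_cst. Qed.

Lemma dsum k (F : 'I_k -> V -> R) x : (forall i, differentiable (F i) x) ->
  differentiable (fun y => \sum_(i < k) F i y) x.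
Proof.
move=> H; have -> : (fun y => \sum_(i < k) F i y) = \sum_(i < k) F i.
  by apply/funext => y; rewrite fct_sumE.
exact: differentiable_sum.
Qed.

Lemma dmx m k (F : V -> 'M[R]_(m, k)) x :
  (forall i j, differentiable (fun y => F y i j) x) -> differentiable F x.
Proof.
move=> H.
have -> : F = \sum_(i < m) \sum_(j < k) (fun y => F y i j *: delta_mx i j).
  apply/funext => y; rewrite fct_sumE.
  rewrite [LHS](matrix_sum_delta (F y)); apply: eq_bigr => i _.
  by rewrite fct_sumE.
apply: differentiable_sum => i; apply: differentiable_sum => j.
exact: differentiableZl.
Qed.

End Gen.

Variables n p : nat.
Notation MM := 'M[R]_(n, p).

Definition phi (Y : MM) : MM := Y *m Acal Y.

Lemma dcoord (Y : MM) i j : differentiable (fun Z : MM => Z i j) Y.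
Proof. exact: differentiable_coord. Qed.

Lemma diff_Acal (Y : MM) k j : differentiable (fun Z : MM => Acal Z k j) Y.
Proof.
have -> : (fun Z : MM => Acal Z k j) =
    (fun Z => (3 / 2 : R)%:M k j + (- (1/2)) * \sum_l Z l k * Z l j).
  apply/funext => Z; rewrite /Acal !mxE mulNr; congr (_ - _); congr (_ * _).
  by apply: eq_bigr => l _; rewrite mxE.
apply: dD; first exact: dcst.
apply: dM; first exact: dcst.
by apply: dsum => l; apply: dM; apply: dcoord.
Qed.

Lemma diff_phi (Y : MM) : differentiable phi Y.
Proof.
apply: dmx => i j.
have -> : (fun Z : MM => phi Z i j) = (fun Z => \sum_k Z i k * Acal Z k j).
  by apply/funext => Z; rewrite /phi mxE.
apply: dsum => k; apply: dM; [exact: dcoord | exact: diff_Acal].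
Qed.

End Diffs.
Section Expand.
Variable R : realType.
Variables n p : nat.
Notation MM := 'M[R]_(n, p).

Lemma psi_expand (X V : MM) (t : R) :
  (t *: V + X)^T *m (t *: V + X) - 1%:M =
  (X^T *m X - 1%:M) + t *: (X^T *m V + V^T *m X) + t ^+ 2 *: (V^T *m V)
  + t ^+ 3 *: 0 + t ^+ 4 *: 0.
Proof.
have -> : (t *: V + X)^T = t *: V^T + X^T by apply/matrixP => i j; rewrite !mxE.
rewrite !scaler0 !addr0.
rewrite !mulmxDl !mulmxDr -!scalemxAl -!scalemxAr !scalerA -expr2.
apply/matrixP => i j; rewrite !mxE; ring.
Qed.

Lemma phi_expand (X V : MM) (t : R) :
  phi (t *: V + X) = phi X
  + t *: (V *m Acal X - (1/2 : R) *: (X *m (X^T *m V + V^T *m X)))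
  + t ^+ 2 *: (- (1/2 : R) *: (X *m (V^T *m V) + V *m (X^T *m V + V^T *m X)))
  + t ^+ 3 *: (- (1/2 : R) *: (V *m (V^T *m V))) + t ^+ 4 *: 0.
Proof.
rewrite /phi /Acal.
have -> : (t *: V + X)^T = t *: V^T + X^T by apply/matrixP => i j; rewrite !mxE.
rewrite !scaler0 !addr0.
do 4 rewrite ?mulmxDl ?mulmxDr ?mulmxN ?mulNmx -?scalemxAl -?scalemxAr ?scalerA.
apply/matrixP => i j; rewrite !mxE; ring.
Qed.

End Expand.
Section Grad.
Variable R : realType.
Variables n p : nat.
Notation MM := 'M[R]_(n, p).

Lemma diff_ip (F : MM -> R) (Y W : MM) : differentiable F Y ->
  'd F Y W = ip (grad F Y) W.
Proof.
move=> dF.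
rewrite {1}(matrix_sum_delta W) linear_sum /ip; apply: eq_bigr => i _.
rewrite linear_sum; apply: eq_bigr => j _.
by rewrite linearZ /= mxE deriveE // mulrC.
Qed.

Lemma derive_ip (F : MM -> R) (Y W : MM) : differentiable F Y ->
  'D_W F Y = ip (grad F Y) W.
Proof. by move=> dF; rewrite deriveE // diff_ip. Qed.

Definition C1 (X V : MM) : MM :=
  V *m Acal X - (1/2 : R) *: (X *m (X^T *m V + V^T *m X)).

Lemma is_derive_phi (X V : MM) : is_derive X V (@phi R n p) (C1 X V).
Proof. apply: poly_derive => t; exact: phi_expand. Qed.

Lemma derive_gfun (f : MM -> R) (X V : MM) :
  (forall Y, differentiable f Y) ->
  'D_V (gfun f) X = ip (Gfun f X) (C1 X V).
Proof.
move=> fd.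
have dg : differentiable (f \o @phi R n p) X.
  by apply: differentiable_comp; [exact: diff_phi | exact: fd].
rewrite (_ : gfun f = f \o @phi R n p) //.
rewrite deriveE // diff_comp //; last exact: diff_phi.
rewrite /= -(deriveE _ (diff_phi X)) (@derive_val _ _ _ _ _ _ _ (is_derive_phi X V)).
by rewrite diff_ip.
Qed.

Lemma diff_gfun (f : MM -> R) (X : MM) :
  (forall Y, differentiable f Y) -> differentiable (gfun f) X.
Proof.
move=> fd; rewrite (_ : gfun f = f \o @phi R n p) //.
by apply: differentiable_comp; [exact: diff_phi | exact: fd].
Qed.

Definition Hpen (beta : R) (Y : MM) : R := beta / 4 * fs (Y^T *m Y - 1%:M).

Lemma is_derive_Hpen beta (X V : MM) :
  is_derive X V (Hpen beta)
    (beta / 4 * (2 * ip (X^T *m X - 1%:M) (X^T *m V + V^T *m X))).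
Proof.
apply: (@poly_derive R _ _ (Hpen beta) X V _
  (beta / 4 * (2 * ip (X^T *m X - 1%:M) (V^T *m V)
     + ip (X^T *m V + V^T *m X) (X^T *m V + V^T *m X)))
  (beta / 4 * (2 * ip (X^T *m V + V^T *m X) (V^T *m V)))
  (beta / 4 * ip (V^T *m V) (V^T *m V))) => t.
rewrite /Hpen psi_expand !scaler0 !addr0.
move: (X^T *m X - 1%:M) (X^T *m V + V^T *m X) (V^T *m V) => S D1 D2.
rewrite /fs !(ipDl, ipDr, ipZl, ipZr) (ipC D1 S) (ipC D2 S) (ipC D2 D1).
rewrite /GRing.scale /=.
ring.
Qed.

End Grad.
Section Main1.
Variable R : realType.
Variables n p : nat.
Notation MM := 'M[R]_(n, p).

Lemma trB m k (A B : 'M[R]_(m, k)) : (A - B)^T = A^T - B^T.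
Proof. by apply/matrixP => i j; rewrite !mxE. Qed.

Lemma S_sym (X : MM) : (X^T *m X - 1%:M)^T = X^T *m X - 1%:M.
Proof. by rewrite trB trmx_mul trmxK trmx1. Qed.

Lemma ip_trl m k (A : 'M[R]_(k, m)) (B : 'M[R]_(m, k)) : ip A^T B = ip A B^T.
Proof. by rewrite -{1}(trmxK B) ip_tr. Qed.

Lemma ip_pen (X V : MM) :
  ip (X^T *m X - 1%:M) (X^T *m V + V^T *m X) = 2 * ip (X *m (X^T *m X - 1%:M)) V.
Proof.
set S := X^T *m X - 1%:M.
have hS : S^T = S by exact: S_sym.
rewrite ipDr (ipC S (X^T *m V)) ip_mull trmxK.
rewrite (ipC S) ip_mulr ip_trl trmx_mul trmxK hS (ipC (X *m S) V).
ring.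
Qed.

Lemma grad_h (f : MM -> R) beta (X : MM) :
  (forall Y, differentiable f Y) ->
  grad (hfun beta f) X = grad (gfun f) X + beta *: (X *m (X^T *m X - 1%:M)).
Proof.
move=> fd; apply/matrixP => i j; rewrite !mxE.
have -> : hfun beta f = gfun f + Hpen beta.
  by apply/funext => Y; rewrite /hfun /Hpen frob_sq.
rewrite deriveD; last first.
- exact: (@ex_derive _ _ _ _ _ _ _ (is_derive_Hpen beta X (delta_mx i j))).
- exact/diff_derivable/diff_gfun.
rewrite (@derive_val _ _ _ _ _ _ _ (is_derive_Hpen beta X (delta_mx i j))).
rewrite ip_pen ip_delta [(X *m _) i j]mxE; congr (_ + _); by field.
Qed.

Lemma C1_XS (X : MM) :
  C1 X (X *m (X^T *m X - 1%:M)) =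
  - (3/2 : R) *: (X *m (X^T *m X - 1%:M) *m (X^T *m X - 1%:M)).
Proof.
set S := X^T *m X - 1%:M.
have hS : S^T = S by exact: S_sym.
have hB : X^T *m X = S + 1%:M by rewrite /S subrK.
rewrite /C1 /Acal trmx_mul hS !mulmxA hB -!mulmxA hB.
do 4 rewrite ?mulmxDl ?mulmxDr ?mulmxN ?mulNmx ?mulmxBr ?mulmxBl
  -?scalemxAl -?scalemxAr ?scalerA ?mul_mx_scalar ?mul_scalar_mx ?mulmx1 ?mul1mx.
rewrite !mulmxA.
move: (X *m X^T *m X *m X^T *m X) => A5; move: (X *m X^T *m X) => A3.
clear hB hS S.
apply/matrixP => i j; rewrite !mxE; ring.
Qed.

Lemma fsX (X : MM) k (M : 'M[R]_(p, k)) :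
  fs (X *m M) = fs M + ip M ((X^T *m X - 1%:M) *m M).
Proof.
rewrite /fs ip_mull mulmxA.
rewrite {1}(_ : X^T *m X = (X^T *m X - 1%:M) + 1%:M); last by rewrite subrK.
by rewrite mulmxDl mul1mx ipDr addrC.
Qed.

Lemma fsX_bound (X : MM) k (M : 'M[R]_(p, k)) :
  `|fs (X *m M) - fs M| <= frob (X^T *m X - 1%:M) * fs M.
Proof.
rewrite fsX addrC addKr.
apply: le_trans (ip_CS _ _) _.
rewrite -frob_sq.
have h1 := frob_mul (X^T *m X - 1%:M) M.
have h2 := frob_ge0 M.
nra.
Qed.

End Main1.
Section Cont.
Variable R : realType.

Lemma lip_cont (V W : normedModType R) (F : V -> W) :
  locally_lipschitz F -> continuous F.
Proof.
move=> H x; have [r r0 [L HL]] := H x.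
have Lp : 0 < `|L| + 1 by rewrite ltr_pwDr // normr_ge0.
apply/cvgrPdist_le => e e0.
have ep : 0 < e / (`|L| + 1) by rewrite divr_gt0.
near=> y.
have hy : `|x - y| < r by near: y; exact: (@cvgr_dist_lt _ _ _ (nbhs x) _ id x (@cvg_id _ (nbhs x)) _ r0).
have hy2 : `|x - y| < e / (`|L| + 1) by near: y; exact: (@cvgr_dist_lt _ _ _ (nbhs x) _ id x (@cvg_id _ (nbhs x)) _ ep).
apply: le_trans (HL x y _ _) _.
- by rewrite subrr normr0.
- by rewrite distrC.
apply: le_trans (ler_wpM2r (normr_ge0 _) (ler_norm L)) _.
apply: le_trans (_ : `|L| * (e / (`|L| + 1)) <= e).
  by rewrite ler_wpM2l ?normr_ge0 // ltW.
rewrite mulrA ler_pdivrMr //; have := normr_ge0 L; nra.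
Unshelve. all: by end_near.
Qed.

End Cont.
Section M1sec.
Variable R : realType.

Lemma frob_delta m k (i : 'I_m) (j : 'I_k) : frob (delta_mx i j : 'M[R]_(m, k)) = 1.
Proof. by rewrite frob_fs /fs ip_delta mxE !eqxx /= sqrtr1. Qed.

Lemma entry_le_frob m k (A : 'M[R]_(m, k)) i j : `|A i j| <= frob A.
Proof.
rewrite -(ip_delta A i j); apply: le_trans (ip_CS _ _) _.
by rewrite frob_delta mulr1.
Qed.

Lemma entry_le_norm m k (A : 'M[R]_(m, k)) i j : `|A i j| <= `|A|.
Proof.
rewrite [leRHS]/Num.Def.normr /= mx_normrE.
exact: (le_bigmax _ (fun ij : 'I_m * 'I_k => `|A ij.1 ij.2|) (i, j)).
Qed.

Variables n p : nat.
Notation MM := 'M[R]_(n, p).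

Lemma vec_mx_norm (w : 'rV[R]_(n * p)) : `|vec_mx w : MM| <= `|w|.
Proof.
rewrite [leLHS]/Num.Def.normr /= mx_normrE.
apply: bigmax_le => [|ij _]; first by rewrite normr_ge0.
by rewrite mxE; apply: entry_le_norm.
Qed.

Lemma vec_mx_cont : continuous (vec_mx : 'rV[R]_(n * p) -> MM).
Proof.
apply: lip_cont => x; exists 1 => //; exists 1 => y z _ _.
have -> : vec_mx y - vec_mx z = vec_mx (y - z) :> MM by rewrite raddfB.
by rewrite mul1r vec_mx_norm.
Qed.

Lemma Omega_entries (Y : MM) : Omega Y -> forall i j, `|Y i j| <= 1 + 1 / 12.
Proof.
rewrite /Omega /= => hY i j.
set E := [set frob (Y *m v) | v in [set v : 'cV[R]_p | frob v = 1]].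
pose e : 'cV[R]_p := delta_mx j 0.
have he : frob e = 1 by rewrite frob_delta.
have hE : has_sup E.
  split; first by exists (frob (Y *m e)); exists e.
  exists (frob Y) => _ [v hv <-].
  by apply: le_trans (frob_mul _ _) _; rewrite hv mulr1.
have h1 : frob (Y *m e) <= spec_norm Y.
  by apply: sup_upper_bound hE _ _; exists e.
apply: le_trans hY; apply: le_trans h1.
by rewrite /e -colE (_ : Y i j = col j Y i 0) ?entry_le_frob // mxE.
Qed.

Lemma X_Omega (X : MM) : frob (X^T *m X - 1%:M) <= 1 / 6 -> Omega X.
Proof.
move=> hX; rewrite /Omega /spec_norm /=.
set E := [set frob (X *m v) | v in [set v : 'cV[R]_p | frob v = 1]].
have [ne|e] := pselect (E !=set0); last first.
  have -> : E = set0.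
    by apply/funext => y; apply/propext; split => // hy; exfalso; apply: e; exists y.
  by rewrite sup0.
apply: ge_sup => // _ [v hv <-].
have hb := fsX_bound X v.
have hfv : fs v = 1 by rewrite -frob_sq hv expr1n.
rewrite hfv mulr1 in hb.
have h2 : fs (X *m v) <= 7 / 6.
  move: hb; rewrite ler_norml => /andP[_ hb]; lra.
have h3 := frob_ge0 (X *m v).
rewrite -frob_sq in h2.
nra.
Qed.

End M1sec.
Section M1sup.
Variable R : realType.
Variables n p : nat.
Notation MM := 'M[R]_(n, p).

Lemma M1_sup (f : MM -> R) (X0 : MM) :
  (forall Y, differentiable f Y) -> locally_lipschitz (grad f) -> Omega X0 ->
  has_sup [set frob (Gfun f Y) | Y in @Omega R n p].
Proof.
move=> fd gl hX0.
split; first by exists (frob (Gfun f X0)); exists X0.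
pose r : R := 1 + 1/12.
pose B := [set v : 'rV[R]_(n * p) | forall k, (`[- r, r]%classic : set R) (v ord0 k)].
have cB : compact B.
  by apply: (@rV_compact _ _ (fun=> `[- r, r]%classic)) => k; exact: segment_compact.
pose Gv := fun v : 'rV[R]_(n * p) => Gfun f (vec_mx v).
have cG : continuous Gv.
  move=> v; apply: continuous_comp; first exact: vec_mx_cont.
  rewrite /Gfun; apply: (@continuous_comp _ _ _ (@phi R n p) (grad f)).
    exact/differentiable_continuous/diff_phi.
  exact: (@lip_cont _ _ _ _ gl (phi (vec_mx v))).
have cI : compact (Gv @` B).
  by apply: continuous_compact => //; exact: continuous_subspaceT.
have [M [_ HM]] := compact_bounded cI.
set c := M + 1.
have hc : forall Z, (Gv @` B) Z -> forall i j, `|Z i j| <= c.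
  move=> Z hZ i j; apply: le_trans (entry_le_norm Z i j) _.
  by apply: (HM c) => //; rewrite /c ltrDl.
exists (\sum_(i < n) \sum_(j < p) c ^+ 2 + 1) => _ [Y hY <-].
have Yin : (Gv @` B) (Gfun f Y).
  exists (mxvec Y); last by rewrite /Gv mxvecK.
  move=> k; case/mxvec_indexP: k => i j; rewrite mxvecE /=.
  by rewrite in_itv /= -ler_norml; apply: Omega_entries.
set Z := Gfun f Y in Yin *.
have hfs : fs Z <= \sum_(i < n) \sum_(j < p) c ^+ 2.
  apply: ler_sum => i _; apply: ler_sum => j _.
  have := hc Z Yin i j; rewrite ler_norml => /andP[h1 h2].
  have c0 : 0 <= c by apply: le_trans (normr_ge0 _) (hc Z Yin i j).
  nra.
have h0 := frob_ge0 Z.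
have hsq := frob_sq Z.
nra.
Qed.

End M1sup.
Unset Implicit Arguments.
Theorem mainTheorem16 (R : realType) (n p : nat) (f : 'M[R]_(n, p) -> R) (beta : R)
  (f_diff : forall X : 'M[R]_(n, p), differentiable f X)
  (f_lip : locally_lipschitz f)
  (gradf_lip : locally_lipschitz (grad f))
  (beta_gt0 : 0 < beta)
  (X : 'M[R]_(n, p))
  (hX : frob (X^T *m X - 1%:M) <= 1 / 6) :
  frob (grad (hfun beta f) X) ^+ 2 >=
    frob (grad (gfun f) X) ^+ 2
    + (2 / 3 * beta ^+ 2 - 4 * beta * M1 f) * frob (X^T *m X - 1%:M) ^+ 2.
Proof.
have hO : Omega X := X_Omega hX.
have hsup := M1_sup f_diff gradf_lip hO.
have hG : frob (Gfun f X) <= M1 f.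
  by apply: sup_upper_bound hsup _ _; exists X.
rewrite grad_h // !frob_sq.
set S := X^T *m X - 1%:M.
set Gg := grad (gfun f) X.
have hip : ip Gg (X *m S) = - (3/2) * ip (Gfun f X) (X *m S *m S).
  rewrite /Gg -derive_ip; last exact: diff_gfun.
  by rewrite derive_gfun // C1_XS ipZr.
have -> : fs (Gg + beta *: (X *m S)) =
    fs Gg + 2 * beta * ip Gg (X *m S) + beta ^+ 2 * fs (X *m S).
  rewrite /fs !(ipDl, ipDr, ipZl, ipZr) (ipC (X *m S) Gg); ring.
rewrite hip.
set a := ip (Gfun f X) (X *m S *m S).
set s := fs S.
set fS := frob S.
have fS0 : 0 <= fS by apply: frob_ge0.
have hs : s = fS ^+ 2 by rewrite /s /fS frob_sq.
have s0 : 0 <= s by apply: fs_ge0.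
have hXS : 5 / 6 * s <= fs (X *m S).
  have := fsX_bound X S; rewrite ler_norml -/s -/fS => /andP[h1 _].
  have : fS * s <= 1 / 6 * s by rewrite ler_wpM2r.
  lra.
have hW : fs (X *m S *m S) <= 7 / 6 * s ^+ 2.
  rewrite -mulmxA.
  have := fsX_bound X (S *m S); rewrite -/S -/fS ler_norml => /andP[_ h2].
  have h3 : fs (S *m S) <= s * s by apply: fs_mul.
  have h4 : 0 <= fs (S *m S) by apply: fs_ge0.
  have h5 : fS * fs (S *m S) <= 1 / 6 * fs (S *m S) by rewrite ler_wpM2r.
  rewrite expr2; lra.
set w := frob (X *m S *m S).
have w0 : 0 <= w by apply: frob_ge0.
have hw : w <= 4 / 3 * s.
  have hw2 : w ^+ 2 <= 7 / 6 * s ^+ 2 by rewrite /w frob_sq.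
  nra.
set g := frob (Gfun f X).
have g0 : 0 <= g by apply: frob_ge0.
have ha : a <= M1 f * (4 / 3 * s).
  have := ip_CS (Gfun f X) (X *m S *m S); rewrite -/a -/g -/w ler_norml.
  move=> /andP[_ h]; apply: le_trans h _.
  by apply: ler_pM.
have hb2 : 0 < beta ^+ 2 by rewrite exprn_gt0.
have : beta ^+ 2 * (5 / 6 * s) <= beta ^+ 2 * fs (X *m S) by rewrite ler_wpM2l // ltW.
have : beta * a <= beta * (M1 f * (4 / 3 * s)) by rewrite ler_wpM2l // ltW.
nra.
Qed.
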